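(* Let $H\subseteq F^7$ be the binary Hamming code of length 7 spanned by the vectors with supports $\{1,2,3\},\{1,4,5\},\{1,6,7\},\{2,4,6\}$. Let $\lambda_1:H\to\{0,1\}$ take the value $0$ exactly on $0^7$, $\{1,6,7\}$, $\{1,3,5,7\}$, $1^7$ (codewords given by supports) and $1$ on the other codewords, and let $\lambda_2:H\to\{0,1\}$ take the value $0$ exactly on $0^7$, $\{1,6,7\}$, $\{2,4,6\}$, $\{4,5,6,7\}$ and $1$ on the other codewords. Then the perfect codes $V22^1=V_H^{\lambda_1}$ and $V3^11=V_H^{\lambda_2}$ of length 15 are not transitive, where $V_H^\lambda=\{(x+y,\ |x|+\lambda(y),\ x)\mid x\in F^7,\ y\in H\}$.
   Context: $|x|=x_1+\dots+x_7\pmod 2$. The automorphism group of a code $C\subseteq F^m$ is $\mathrm{Aut}(C)=\{(y,\pi)\mid y\in F^m,\ \pi\in S_m,\ y+\pi(C)=C\}$, where permutations act by permuting coordinates. A code $C$ is transitive if $\mathrm{Aut}(C)$ has a subgroup acting transitively on the codewords of $C$; equivalently, for every $y\in C$ there is $\pi\in S_m$ with $y+\pi(C)=C$. *)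

(* Defs.v *)
From HB Require Import structures.
From mathcomp Require Import all_boot all_order all_algebra all_fingroup.
Set Implicit Arguments. Unset Strict Implicit. Unset Printing Implicit Defensive.
Import GRing.Theory.
Local Open Scope ring_scope.

(* the 0/1 vector of length n whose support is s (coordinates numbered 1..n) *)
Definition supp_vec (n : nat) (s : seq nat) : 'rV['F_2]_n :=
  \row_(i < n) (if i.+1 \in s then 1 else 0).

Definition wt2 (n : nat) (x : 'rV['F_2]_n) : 'F_2 := \sum_(i < n) x 0 i.

Definition genH : 'M['F_2]_(4, 7) :=
  col_mx (col_mx (supp_vec 7 [:: 1; 2; 3]) (supp_vec 7 [:: 1; 4; 5]))
         (col_mx (supp_vec 7 [:: 1; 6; 7]) (supp_vec 7 [:: 2; 4; 6])).

Definition Ham : {set 'rV['F_2]_7} := [set v : 'rV['F_2]_7 | (v <= genH)%MS].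

(* lambda_1 and lambda_2 (only their values on H are relevant) *)
Definition lam1 (y : 'rV['F_2]_7) : 'F_2 :=
  if y \in [:: supp_vec 7 [::]; supp_vec 7 [:: 1; 6; 7];
              supp_vec 7 [:: 1; 3; 5; 7]; supp_vec 7 [:: 1; 2; 3; 4; 5; 6; 7]]
  then 0 else 1.

Definition lam2 (y : 'rV['F_2]_7) : 'F_2 :=
  if y \in [:: supp_vec 7 [::]; supp_vec 7 [:: 1; 6; 7];
              supp_vec 7 [:: 2; 4; 6]; supp_vec 7 [:: 4; 5; 6; 7]]
  then 0 else 1.

Definition VHl (lam : 'rV['F_2]_7 -> 'F_2) : {set 'rV['F_2]_(7 + 1 + 7)} :=
  [set row_mx (row_mx (x + y) (\row_(_ < 1) (wt2 x + lam y))) x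
     | x : 'rV['F_2]_7, y : 'rV['F_2]_7 in Ham].

Definition perm_code (n : nat) (s : 'S_n) (C : {set 'rV['F_2]_n}) :
  {set 'rV['F_2]_n} := [set col_perm s c | c in C].

Definition transl (n : nat) (y : 'rV['F_2]_n) (C : {set 'rV['F_2]_n}) :
  {set 'rV['F_2]_n} := [set y + c | c in C].

Definition transitive_code (n : nat) (C : {set 'rV['F_2]_n}) : Prop :=
  forall y, y \in C -> exists s : 'S_n, transl y (perm_code s C) = C.

(* Main.v *)
Require Import Defs.
From mathcomp Require Import all_boot all_order all_algebra all_fingroup.
From Stdlib Require Import PeanoNat.
Import GRing.Theory.
Local Open Scope ring_scope.

Lemma F2_cases (a : 'F_2) : a = (a != 0)%:R.
Proof. case: a => [[|[|n]] Hn]. all: try by apply/val_inj. Qed.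
Lemma F2_add (a b : bool) : (a%:R + b%:R : 'F_2) = (a (+) b)%:R.
Proof. by case: a; case: b; apply/val_inj. Qed.
Lemma F2_eq (a b : bool) : ((a%:R : 'F_2) == b%:R) = (a == b).
Proof. by case: a; case: b. Qed.
Lemma F2_xx (a : 'F_2) : a + a = 0.
Proof. by rewrite [a]F2_cases F2_add addbb. Qed.

Definition vec (m : nat) : 'rV['F_2]_7 := \row_(i < 7) (Nat.testbit m i)%:R.

Lemma vec_add a b : vec a + vec b = vec (Nat.lxor a b).
Proof. apply/rowP => i; rewrite !mxE F2_add Nat.lxor_spec. by case: (Nat.testbit a i); case: (Nat.testbit b i). Qed.
Lemma vec0 : vec 0 = 0.
Proof. by apply/rowP => i; rewrite !mxE Nat.bits_0. Qed.
Lemma vec_scale (b : bool) g : (b%:R : 'F_2) *: vec g = vec (if b then g else 0).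
Proof. by case: b; rewrite ?scale1r ?scale0r ?vec0. Qed.

Lemma sv1 : supp_vec 7 [:: 1; 2; 3] = vec 7.
Proof. by apply/rowP => i; rewrite !mxE; case: i => [[|[|[|[|[|[|[|//]]]]]]] Hi]. Qed.
Lemma sv2 : supp_vec 7 [:: 1; 4; 5] = vec 25.
Proof. by apply/rowP => i; rewrite !mxE; case: i => [[|[|[|[|[|[|[|//]]]]]]] Hi]. Qed.
Lemma sv3 : supp_vec 7 [:: 1; 6; 7] = vec 97.
Proof. by apply/rowP => i; rewrite !mxE; case: i => [[|[|[|[|[|[|[|//]]]]]]] Hi]. Qed.
Lemma sv4 : supp_vec 7 [:: 2; 4; 6] = vec 42.
Proof. by apply/rowP => i; rewrite !mxE; case: i => [[|[|[|[|[|[|[|//]]]]]]] Hi]. Qed.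
Lemma sv5 : supp_vec 7 [:: 1; 3; 5; 7] = vec 85.
Proof. by apply/rowP => i; rewrite !mxE; case: i => [[|[|[|[|[|[|[|//]]]]]]] Hi]. Qed.
Lemma sv6 : supp_vec 7 [:: 1; 2; 3; 4; 5; 6; 7] = vec 127.
Proof. by apply/rowP => i; rewrite !mxE; case: i => [[|[|[|[|[|[|[|//]]]]]]] Hi]. Qed.
Lemma sv7 : supp_vec 7 [:: 4; 5; 6; 7] = vec 120.
Proof. by apply/rowP => i; rewrite !mxE; case: i => [[|[|[|[|[|[|[|//]]]]]]] Hi]. Qed.
Lemma sv0 : supp_vec 7 [::] = vec 0.
Proof. by apply/rowP => i; rewrite !mxE; case: i => [[|[|[|[|[|[|[|//]]]]]]] Hi]. Qed.

Definition sel (b : bool) (g : nat) := if b then g else 0%N.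
Definition combo (q : bool * bool * bool * bool) : nat :=
  let: (b0, b1, b2, b3) := q in
  Nat.lxor (Nat.lxor (sel b0 7) (sel b1 25)) (Nat.lxor (sel b2 97) (sel b3 42)).
Definition bools4 : seq (bool * bool * bool * bool) :=
  [:: (false, false, false, false); (false, false, false, true); (false, false, true, false); (false, false, true, true); (false, true, false, false); (false, true, false, true); (false, true, true, false); (false, true, true, true); (true, false, false, false); (true, false, false, true); (true, false, true, false); (true, false, true, true); (true, true, false, false); (true, true, false, true); (true, true, true, false); (true, true, true, true)].
Definition Hlist : seq nat := [seq combo q | q <- bools4].

Lemma mulgen (b0 b1 b2 b3 : bool) :
  (row_mx (row_mx (b0%:R%:M) (b1%:R%:M)) (row_mx (b2%:R%:M) (b3%:R%:M))
     : 'rV['F_2]_((1+1)+(1+1))) *m genH = vec (combo (b0, b1, b2, b3)).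
Proof.
by rewrite /genH !mul_row_col !mul_scalar_mx sv1 sv2 sv3 sv4 !vec_scale !vec_add.
Qed.

Lemma ex11 (u : 'M['F_2]_1) : exists b : bool, u = b%:R%:M.
Proof. by exists (u 0 0 != 0); rewrite {1}[u]mx11_scalar -F2_cases. Qed.

Lemma Ham_enum h : h \in Ham -> exists2 m, m \in Hlist & h = vec m.
Proof.
rewrite inE => /submxP [k ->].
pose k' : 'rV['F_2]_((1+1)+(1+1)) := k.
rewrite -[k]/k' -(hsubmxK k') -(hsubmxK (lsubmx k')) -(hsubmxK (rsubmx k')).
have [b0 ->] := ex11 (lsubmx (lsubmx k')).
have [b1 ->] := ex11 (rsubmx (lsubmx k')).
have [b2 ->] := ex11 (lsubmx (rsubmx k')).
have [b3 ->] := ex11 (rsubmx (rsubmx k')).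
rewrite mulgen; exists (combo (b0, b1, b2, b3)) => //.
by apply: map_f; case: b0; case: b1; case: b2; case: b3.
Qed.

Lemma vec_in_Ham m : m \in Hlist -> vec m \in Ham.
Proof.
case/mapP => [[[[b0 b1] b2] b3]] _ ->.
by rewrite -mulgen inE submxMl.
Qed.

Arguments vec_in_Ham {m}.
Arguments Ham_enum {h}.

Lemma Ham_add h1 h2 : h1 \in Ham -> h2 \in Ham -> h1 + h2 \in Ham.
Proof. by rewrite !inE; apply: addmx_sub. Qed.

Lemma Ham0 : 0 \in Ham.
Proof. by rewrite inE sub0mx. Qed.

Lemma wt2D (x y : 'rV['F_2]_7) : wt2 (x + y) = wt2 x + wt2 y.
Proof. by rewrite /wt2 -big_split; apply: eq_bigr => i _; rewrite mxE. Qed.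
Lemma wt20 : wt2 (0 : 'rV['F_2]_7) = 0.
Proof. by rewrite /wt2 big1 // => i _; rewrite mxE. Qed.

Lemma vec_inj_in : {in Hlist &, injective vec}.
Proof.
have H : all (fun a => all (fun b =>
   all (fun i => Nat.testbit a i == Nat.testbit b i) (iota 0 7) ==> (a == b)) Hlist) Hlist.
  by vm_compute.
move=> a b Ha Hb E.
move/allP: H => /(_ a Ha) /allP /(_ b Hb) /implyP H; apply/eqP; apply: H.
apply/allP => i; rewrite mem_iota /= add0n => Hi.
have := congr1 (fun v : 'rV['F_2]_7 => v 0 (Ordinal Hi)) E; rewrite /= !mxE.
by rewrite -F2_eq => ->.
Qed.

Lemma Hlist_lxor : {in Hlist &, forall a b, Nat.lxor a b \in Hlist}.
Proof.
have H : all (fun a => all (fun b => Nat.lxor a b \in Hlist) Hlist) Hlist by vm_compute.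
by move=> a b Ha Hb; move/allP: H => /(_ a Ha) /allP /(_ b Hb).
Qed.

Lemma addr6 (V : zmodType) (a b c d e f : V) :
  a + b + (c + d) + (e + f) = a + c + e + (b + d + f).
Proof. by rewrite (addrACA a b c d) (addrACA (a + c) (b + d) e f). Qed.

Section Generic.
Variable lam : 'rV['F_2]_7 -> 'F_2.
Variable L : seq nat.
Hypothesis lamE : forall m, m \in Hlist -> lam (vec m) = (m \notin L)%:R.
Hypothesis L0 : 0%N \in L.

Local Notation Cl := (VHl lam).

Definition P (x h : 'rV['F_2]_7) : 'rV['F_2]_(7 + 1 + 7) :=
  row_mx (row_mx (x + h) (\row_(_ < 1) (wt2 x + lam h))) x.

Lemma memC v : v \in Cl -> exists x h, h \in Ham /\ v = P x h.
Proof. by case/imset2P => x h _ Hh ->; exists x, h. Qed.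

Arguments memC {v}.

Lemma P_in x h : h \in Ham -> P x h \in Cl.
Proof. by move=> Hh; apply/imset2P; exists x h. Qed.

Lemma P_inj x1 h1 x2 h2 : P x1 h1 = P x2 h2 -> x1 = x2 /\ h1 = h2.
Proof.
case/eq_row_mx => /eq_row_mx [E1 _] E2; split => //.
by move: E1; rewrite E2 => /addrI.
Qed.

Lemma lam0 : lam 0 = 0.
Proof.
have H0 : (0%N \in Hlist) by [].
by rewrite -vec0 lamE // L0.
Qed.

Lemma P00 : P 0 0 = 0.
Proof.
rewrite /P addr0 wt20 lam0 add0r.
have -> : (\row_(_ < 1) (0 : 'F_2)) = 0 by apply/rowP => i; rewrite !mxE.
by rewrite !row_mx0.
Qed.

Lemma P_add3 x1 h1 x2 h2 x3 h3 :
  P x1 h1 + P x2 h2 + P x3 h3 =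
  row_mx (row_mx ((x1 + x2 + x3) + (h1 + h2 + h3))
     (\row_(_ < 1) (wt2 (x1 + x2 + x3) + (lam h1 + lam h2 + lam h3)))) (x1 + x2 + x3).
Proof.
rewrite /P !add_row_mx; congr row_mx; congr row_mx.
  exact: addr6.
by apply/rowP => i; rewrite !mxE !wt2D addr6.
Qed.

Lemma adjC x1 h1 x2 h2 x3 h3 : h1 \in Ham -> h2 \in Ham -> h3 \in Ham ->
  (P x1 h1 + P x2 h2 + P x3 h3 \in Cl) =
  (lam h1 + lam h2 + lam h3 == lam (h1 + h2 + h3)).
Proof.
move=> H1 H2 H3; rewrite P_add3.
have Hs : h1 + h2 + h3 \in Ham by rewrite !Ham_add.
apply/idP/eqP.
  case/memC => x [h [Hh E]].
  move: E; rewrite /P => /eq_row_mx [/eq_row_mx [E1 E2] E3].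
  move: E1; rewrite E3 => /addrI E1.
  have := congr1 (fun v : 'rV['F_2]_1 => v 0 0) E2; rewrite !mxE E3 => /addrI ->.
  by rewrite E1.
move=> E; rewrite E; exact: P_in.
Qed.


Definition adjM a m b :=
  ((a \notin L) (+) (m \notin L) (+) (b \notin L)) == (Nat.lxor (Nat.lxor a m) b \notin L).
Definition cnt a b := count (fun m => adjM a m b) Hlist.

Lemma adj_vec a m b : a \in Hlist -> m \in Hlist -> b \in Hlist ->
  (lam (vec a) + lam (vec m) + lam (vec b) == lam (vec a + vec m + vec b)) = adjM a m b.
Proof.
move=> Ha Hm Hb.
by rewrite !vec_add !lamE ?Hlist_lxor // !F2_add F2_eq.
Qed.

Definition Dz (z : 'rV['F_2]_(7 + 1 + 7)) := #|[set d in Cl | z + d \in Cl]|.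

Lemma Dz_val x a b : a \in Hlist -> b \in Hlist ->
  Dz (P x (vec a) + P 0 (vec b)) = (#|[set: 'rV['F_2]_7]| * cnt a b)%N.
Proof.
move=> Ha Hb.
set S := [set h in Ham | lam (vec a) + lam h + lam (vec b) == lam (vec a + h + vec b)].
have HaH := vec_in_Ham Ha; have HbH := vec_in_Ham Hb.
have E : [set d in Cl | P x (vec a) + P 0 (vec b) + d \in Cl] =
         [set P p.1 p.2 | p in setX [set: 'rV['F_2]_7] S].
  apply/setP => d; rewrite inE; apply/andP/imsetP.
    case=> /memC [x' [h [Hh ->]]]; rewrite addrAC adjC // => Hadj.
    by exists (x', h) => //; rewrite in_setX in_setT /= inE Hh Hadj.
  case=> [[x' h]]; rewrite in_setX => /andP [_]; rewrite inE => /andP [Hh Hadj] ->.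
  by split; [exact: P_in | rewrite /= addrAC adjC].
rewrite /Dz E card_imset; last by move=> [x1 h1] [x2 h2] /= /P_inj [-> ->].
rewrite cardsX; congr (_ * _)%N.
have ES : S =i [seq vec m | m <- Hlist & adjM a m b].
  move=> h; rewrite inE; apply/andP/mapP.
    case=> Hh Hadj; case: (Ham_enum Hh) => m Hm Eh; exists m => //.
    by rewrite mem_filter -adj_vec // -Eh Hadj Hm.
  case=> m; rewrite mem_filter => /andP [Hadj Hm] ->.
  by split; [exact: vec_in_Ham | rewrite adj_vec].
have Hu : uniq [seq vec m | m <- Hlist & adjM a m b].
  rewrite map_inj_in_uniq; first by apply: filter_uniq; vm_compute.
  by move=> u v; rewrite !mem_filter => /andP [_ Hu] /andP [_ Hv]; exact: vec_inj_in.
by rewrite (eq_card ES) (card_uniqP Hu) size_map size_filter.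
Qed.

Lemma vv (v : 'rV['F_2]_(7 + 1 + 7)) : v + v = 0.
Proof. by apply/rowP => i; rewrite !mxE F2_xx. Qed.

Theorem not_trans ma m0 : ma \in Hlist -> m0 \in Hlist ->
  all (fun m => cnt ma 0 != cnt m m0) Hlist -> ~ transitive_code Cl.
Proof.
move=> Ha H0 Hall Htr.
pose y0 := P 0 (vec m0).
have Hy0 : y0 \in Cl by apply: P_in; exact: vec_in_Ham.
have [s Es] := Htr y0 Hy0.
pose f c := y0 + col_perm s c.
have f_in c : c \in Cl -> f c \in Cl.
  by move=> Hc; rewrite -Es; apply: imset_f; apply: imset_f.
have f_onto d : d \in Cl -> exists2 c, c \in Cl & d = f c.
  by rewrite -{1}Es => /imsetP [c' /imsetP [c Hc ->] ->]; exists c.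
have f_inj : injective f.
  move=> c d /addrI /(congr1 (col_perm s^-1)).
  by rewrite -!col_permM mulVg !col_perm1.
have f_add c d : f c + y0 + f d = f (c + d).
  by rewrite /f raddfD !addrA; congr (_ + _); rewrite -addrA vv addr0.
have Dz_f c : c \in Cl -> Dz c = Dz (f c + y0).
  move=> Hc; rewrite /Dz -(card_imset _ f_inj); apply: eq_card => d.
  apply/imsetP/idP.
    case=> e; rewrite inE => /andP [He Hce] ->.
    by rewrite inE f_in // f_add f_in.
  rewrite inE => /andP [Hd Hcd]; have [e He Ede] := f_onto d Hd.
  exists e => //; rewrite inE He /=.
  move: Hcd; rewrite Ede f_add => /f_onto [e' He' /f_inj ->] //.
pose c := P 0 (vec ma).
have Hc : c \in Cl by apply: P_in; exact: vec_in_Ham.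
have Ec : c = P 0 (vec ma) + P 0 (vec 0%N) by rewrite vec0 P00 addr0.
have [x' [h' [Hh' Efc]]] := memC (f_in c Hc).
have [m' Hm' Eh'] := Ham_enum Hh'.
have := Dz_f c Hc; rewrite {1}Ec Efc Eh' !Dz_val //.
have Hpos : (0 < #|[set: 'rV['F_2]_7]|)%N by apply/card_gt0P; exists 0; rewrite in_setT.
move/eqP; rewrite eqn_pmul2l // => /eqP E.
by move/allP: Hall => /(_ m' Hm'); rewrite E eqxx.
Qed.

End Generic.


Lemma vec_mem m (L : seq nat) : m \in Hlist -> all (mem Hlist) L ->
  (vec m \in map vec L) = (m \in L).
Proof.
move=> Hm HL; apply/mapP/idP; last by move=> H; exists m.
case=> n Hn /vec_inj_in -> //.
by move/allP: HL => /(_ n Hn).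
Qed.

Lemma lam1E m : m \in Hlist -> lam1 (vec m) = (m \notin [:: 0; 97; 85; 127]%N)%:R.
Proof.
move=> Hm; rewrite /lam1 sv0 sv3 sv5 sv6.
have HL : all (mem Hlist) [:: 0; 97; 85; 127]%N by vm_compute.
rewrite -[[:: vec 0; _; _; _]]/(map vec [:: 0; 97; 85; 127]%N) (vec_mem _ _ Hm HL).
by case: (m \in _).
Qed.

Lemma lam2E m : m \in Hlist -> lam2 (vec m) = (m \notin [:: 0; 97; 42; 120]%N)%:R.
Proof.
move=> Hm; rewrite /lam2 sv0 sv3 sv4 sv7.
have HL : all (mem Hlist) [:: 0; 97; 42; 120]%N by vm_compute.
rewrite -[[:: vec 0; _; _; _]]/(map vec [:: 0; 97; 42; 120]%N) (vec_mem _ _ Hm HL).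
by case: (m \in _).
Qed.

Theorem lemma4 :
  ~ transitive_code (VHl lam1) /\ ~ transitive_code (VHl lam2).
Proof.
have H30 : (30 \in Hlist)%N by vm_compute.
have H25 : (25 \in Hlist)%N by vm_compute.
have H7 : (7 \in Hlist)%N by vm_compute.
have L10 : (0 \in [:: 0; 97; 85; 127])%N by vm_compute.
have L20 : (0 \in [:: 0; 97; 42; 120])%N by vm_compute.
have A1 : all (fun m => cnt [:: 0; 97; 85; 127]%N 30 0 != cnt [:: 0; 97; 85; 127]%N m 7) Hlist
  by vm_compute.
have A2 : all (fun m => cnt [:: 0; 97; 42; 120]%N 25 0 != cnt [:: 0; 97; 42; 120]%N m 7) Hlist
  by vm_compute.
split.
  exact: (@not_trans lam1 [:: 0; 97; 85; 127]%N lam1E L10 30 7 H30 H7 A1).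
exact: (@not_trans lam2 [:: 0; 97; 42; 120]%N lam2E L20 25 7 H25 H7 A2).
Qed.
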